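(* Let $n$ be an odd positive integer and let $S\cong\begin{bmatrix} C_n\\ B\end{bmatrix}$ be a linear matrix. Then either $g(S)<n$ or every row of $B$ has at most one or at least three nonzero entries.
   Context: A $\{0,1\}$-matrix is linear if it has no $2\times 2$ submatrix with all entries $1$. Matrices are congruent ($\cong$) if one is obtained from the other by permuting rows and columns. $C_n$ is the $n\times n$ matrix with $c_{i,j}=1$ iff $j\in\{i,i+1\}$ (indices mod $n$). An odd cycle matrix of order $k$ is a matrix congruent to $C_k$ with $k$ odd. For a $\{0,1\}$-matrix $A$, $g(A)=\infty$ if $A$ has no odd cycle submatrix, and otherwise $g(A)$ is the least order of an odd cycle submatrix of $A$. *)

(* Defs.v *)
(* {0,1}-matrices are represented as boolean matrices 'M[bool]_(m,n). *)
From mathcomp Require Import all_boot all_order all_algebra all_fingroup.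
Set Implicit Arguments. Unset Strict Implicit. Unset Printing Implicit Defensive.

Definition linear_mx (m n : nat) (A : 'M[bool]_(m, n)) : Prop :=
  ~ exists (i1 i2 : 'I_m) (j1 j2 : 'I_n),
      [/\ i1 != i2, j1 != j2 & [&& A i1 j1, A i1 j2, A i2 j1 & A i2 j2]].

Definition congruent_mx (m n : nat) (A B : 'M[bool]_(m, n)) : Prop :=
  exists (s : 'S_m) (t : 'S_n), forall i j, A i j = B (s i) (t j).

(* C_n : c_{i,j} = 1 iff j in {i, i+1} (indices mod n), 0-based indices. *)
Definition Cmx (n : nat) : 'M[bool]_n :=
  \matrix_(i < n, j < n) ((val j == val i) || (val j == (val i).+1 %% n)).

(* A has an odd cycle submatrix of order k: a k x k submatrix (rows and
   columns selected injectively, in any order, which accounts for the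
   congruence) equal to C_k, with k odd (and k >= 3). *)
Definition odd_cycle_submx (m n : nat) (A : 'M[bool]_(m, n)) (k : nat) : Prop :=
  [/\ odd k, 3 <= k &
   exists (f : 'I_k -> 'I_m) (g : 'I_k -> 'I_n),
     [/\ injective f, injective g & forall i j, A (f i) (g j) = Cmx k i j]].

(* g(A) < N  (g(A) = infinity when there is no odd cycle submatrix). *)
Definition girth_lt (m n : nat) (A : 'M[bool]_(m, n)) (N : nat) : Prop :=
  exists k, k < N /\ odd_cycle_submx A k.

Definition row_nnz (r n : nat) (B : 'M[bool]_(r, n)) (i : 'I_r) : nat :=
  #|[set j | B i j]|.

(* Main.v *)
Require Import Defs.
From mathcomp Require Import all_boot all_order all_algebra all_fingroup.
From mathcomp Require Import zify.

Lemma modkey (n c a b : nat) : a < n -> b < n ->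
  ((c + a) %% n == (c + b) %% n) = (a == b).
Proof. move=> ha hb. by rewrite eqn_modDl !modn_small. Qed.

Lemma cyc (n r : nat) (B : 'M[bool]_(r,n)) (b : 'I_r) (c L : nat)
  (n0 : 0 < n) (Hc : c < n) (HL : L <= n) (HL2 : 2 <= L)
  (HB : forall y : 'I_n, B b y = (val y == c) || (val y == (c + L.-1) %% n)) :
  exists (f : 'I_L -> 'I_(n + r)) (g : 'I_L -> 'I_n),
    [/\ injective f, injective g &
        forall i j, col_mx (Cmx n) B (f i) (g j) = Cmx L i j].
Proof.
pose g (j : 'I_L) : 'I_n := Ordinal (ltn_pmod (c + j) n0).
pose f (i : 'I_L) : 'I_(n + r) :=
  if val i < L.-1 then lshift r (g i) else rshift n b.
exists f, g; split.
- move=> i j; rewrite /f.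
  case: ifP => hi; case: ifP => hj => /(congr1 val) /= e.
  + apply: val_inj; apply/eqP; rewrite -(@modkey n c _ _ (leq_trans (ltn_ord i) HL) (leq_trans (ltn_ord j) HL)).
    by apply/eqP.
  + have := ltn_pmod (c + i) n0; lia.
  + have := ltn_pmod (c + j) n0; lia.
  + apply: val_inj; have := ltn_ord i; have := ltn_ord j; move: hi hj; rewrite /=; lia.
- move=> i j /(congr1 val) /= /eqP.
  rewrite (@modkey n c _ _ (leq_trans (ltn_ord i) HL) (leq_trans (ltn_ord j) HL)).
  by move=> /eqP e; apply: val_inj.
- move=> i j; rewrite /f.
  case: ifP => hi.
  + rewrite col_mxEu /Cmx !mxE /=.
    rewrite -addn1 modnDml -addnA addn1.
    rewrite (@modkey n c _ _ (leq_trans (ltn_ord j) HL) (leq_trans (ltn_ord i) HL)).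
    have hi' : (nat_of_ord i) < L.-1 := hi.
    rewrite (@modkey n c _ _ (leq_trans (ltn_ord j) HL)); last lia.
    rewrite (modn_small (m := i.+1)) //; lia.
  + rewrite col_mxEd HB /Cmx !mxE /=.
    have hi' : (nat_of_ord i < L.-1) = false := hi.
    have ei : nat_of_ord i = L.-1 by have := ltn_ord i; lia.
    rewrite ei prednK; last lia.
    rewrite modnn -{2}(modn_small Hc) -{2}(addn0 c).
    rewrite (@modkey n c _ _ (leq_trans (ltn_ord j) HL) n0).
    rewrite (@modkey n c _ _ (leq_trans (ltn_ord j) HL)); last lia.
    by rewrite orbC.
Qed.

Lemma key (n r : nat) (B : 'M[bool]_(r,n)) (b : 'I_r) (p q : nat) :
  odd n -> p < q -> q < n ->
  (forall y : 'I_n, B b y = (val y == p) || (val y == q)) ->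
  (~ exists (x1 x2 : 'I_(n + r)) (y1 y2 : 'I_n),
      [/\ x1 != x2, y1 != y2 & [&& col_mx (Cmx n) B x1 y1, col_mx (Cmx n) B x1 y2,
            col_mx (Cmx n) B x2 y1 & col_mx (Cmx n) B x2 y2]]) ->
  exists k, [/\ k < n, odd k, 3 <= k & exists (f : 'I_k -> 'I_(n + r)) (g : 'I_k -> 'I_n),
     [/\ injective f, injective g & forall i j, col_mx (Cmx n) B (f i) (g j) = Cmx k i j]].
Proof.
move=> Hodd hpq hqn HB Hlin.
have n0 : 0 < n by lia.
have hpn : p < n by lia.
case: (eqVneq q p.+1) => [eq1|ne1].
  exfalso; apply: Hlin.
  exists (lshift r (Ordinal hpn)), (rshift n b), (Ordinal hpn), (Ordinal hqn); split.
  - by apply/eqP => /(congr1 val) /=; lia.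
  - by apply/eqP => /(congr1 val) /=; lia.
  - rewrite !col_mxEu !col_mxEd !HB /Cmx !mxE /= eq1 modn_small ?eqxx ?orbT //; lia.
case: (boolP ((p == 0) && (q == n.-1))) => [/andP [/eqP p0 /eqP qn1]|ne2].
  have hn1 : n.-1 < n by lia.
  exfalso; apply: Hlin.
  exists (lshift r (Ordinal hn1)), (rshift n b), (Ordinal hpn), (Ordinal hqn); split.
  - by apply/eqP => /(congr1 val) /=; lia.
  - by apply/eqP => /(congr1 val) /=; lia.
  - rewrite !col_mxEu !col_mxEd !HB /Cmx !mxE /= p0 qn1 prednK // modnn !eqxx ?orbT //.
have h2 : 2 <= q - p by lia.
have h3 : q - p <= n - 2 by lia.
have hsum : odd ((q - p).+1 + (n - (q - p)).+1).
  by rewrite (_ : (q - p).+1 + (n - (q - p)).+1 = n.+2) /= ?negbK //; lia.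

case: (boolP (odd (q - p).+1)) => ho.
  exists (q - p).+1; split; [lia | by [] | lia | ].
  have := @cyc n r B b p (q - p).+1 n0 hpn; apply; try lia.
  by move=> y; rewrite HB /= (_ : p + (q - p) = q) ?modn_small //; lia.
move: hsum; rewrite oddD (negbTE ho) /= => ho2.
exists (n - (q - p)).+1; split; [lia | by [] | lia | ].
have := @cyc n r B b q (n - (q - p)).+1 n0 hqn; apply; try lia.
move=> y; rewrite HB /= (_ : q + (n - (q - p)) = p + n); last lia.
by rewrite modnDr modn_small // orbC.
Qed.

Theorem lemma3 (n r : nat) (S : 'M[bool]_(n + r, n)) (B : 'M[bool]_(r, n)) :
  odd n -> 0 < n ->
  linear_mx S ->
  congruent_mx S (col_mx (Cmx n) B) ->
  girth_lt S n \/ (forall i : 'I_r, row_nnz B i <= 1 \/ 3 <= row_nnz B i).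
Proof.
move=> Hodd n0 Hlin [s [t Hst]].
case: (boolP [exists i, row_nnz B i == 2]) => [/existsP [b Hb]|Hno]; last first.
  right=> i; move/existsPn: Hno => /(_ i) h.
  have : row_nnz B i != 2 := h. move=> /eqP; lia.
left.
move: Hb; rewrite /row_nnz => /cards2P [p [q [npq Hset]]].
have HB : forall y : 'I_n, B b y = (y == p) || (y == q).
  move=> y; have : (y \in [set j | B b j]) = (y \in [set p; q]) by rewrite Hset.
  by rewrite !inE.
have Hlin' : ~ exists (x1 x2 : 'I_(n + r)) (y1 y2 : 'I_n),
      [/\ x1 != x2, y1 != y2 & [&& col_mx (Cmx n) B x1 y1, col_mx (Cmx n) B x1 y2,
            col_mx (Cmx n) B x2 y1 & col_mx (Cmx n) B x2 y2]].
  move=> [x1 [x2 [y1 [y2 [h1 h2 h3]]]]]; apply: Hlin.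
  exists ((s^-1)%g x1), ((s^-1)%g x2), ((t^-1)%g y1), ((t^-1)%g y2); split.
  - by apply: contra h1 => /eqP /(congr1 s); rewrite !permKV => ->.
  - by apply: contra h2 => /eqP /(congr1 t); rewrite !permKV => ->.
  - by rewrite !Hst !permKV.
have [k [hk hodd h3 [f [g [fi gi hfg]]]]] : exists k, [/\ k < n, odd k, 3 <= k &
    exists (f : 'I_k -> 'I_(n + r)) (g : 'I_k -> 'I_n),
     [/\ injective f, injective g & forall i j, col_mx (Cmx n) B (f i) (g j) = Cmx k i j]].
  case: (ltngtP (val p) (val q)) => hpq.
  - apply: (@key n r B b p q Hodd hpq (ltn_ord q) _ Hlin').
    by move=> y; rewrite HB -!(inj_eq val_inj).
  - apply: (@key n r B b q p Hodd hpq (ltn_ord p) _ Hlin').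
    by move=> y; rewrite HB -!(inj_eq val_inj) orbC.
  - by exfalso; move/eqP: npq; apply; apply: val_inj.
exists k; split => //; split => //.
exists (fun i => (s^-1)%g (f i)), (fun j => (t^-1)%g (g j)); split.
- by move=> i j /perm_inj /fi.
- by move=> i j /perm_inj /gi.
- by move=> i j; rewrite Hst !permKV.
Qed.
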